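(* Let $\mathbb{S}$ be the Sorgenfrey line. The symmetric product $\mathcal{F}_2(\mathbb{S})$ is homeomorphic to $\mathbb{S}^2$. In particular, $\mathcal{F}_2(\mathbb{S})$ is homogeneous.
   Context: The Sorgenfrey line $\mathbb{S}$ is the real line with the topology generated by half-open intervals $[a,b[$. For a space $X$, $\mathcal{F}_2(X)$ denotes the set of all nonempty subsets of $X$ of cardinality at most $2$, with the subspace topology inherited from the hyperspace of closed subsets of $X$ with the Vietoris topology. A space $Y$ is homogeneous if for all $x,y\in Y$ there is a homeomorphism $h:Y\to Y$ with $h(x)=y$. *)

(* Defs.v *)
From Stdlib Require Import Reals List.
Open Scope R_scope.

Record space := Space { carrier :> Type; is_open : (carrier -> Prop) -> Prop }.

Definition is_closed (X : space) (A : X -> Prop) : Prop :=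
  is_open X (fun x => ~ A x).

(* Topology generated by a subbase B: W is open iff every point of W lies in a
   finite intersection of members of B contained in W (empty intersection = whole space). *)
Definition generated {T : Type} (B : (T -> Prop) -> Prop) (W : T -> Prop) : Prop :=
  forall x, W x -> exists l : list (T -> Prop),
    Forall B l /\ Forall (fun S => S x) l /\
    (forall y, Forall (fun S => S y) l -> W y).

Definition sorgenfrey_open (U : R -> Prop) : Prop :=
  forall x, U x -> exists a b, a <= x < b /\ (forall y, a <= y < b -> U y).

Definition Sorgenfrey : space := Space R sorgenfrey_open.

Definition prod_space (X Y : space) : space :=
  Space (X * Y)%type (fun W => forall p, W p -> exists (U : X -> Prop) (V : Y -> Prop),
     is_open X U /\ is_open Y V /\ U (fst p) /\ V (snd p) /\
     (forall q, U (fst q) -> V (snd q) -> W q)).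

Definition subspace (Y : space) (P : Y -> Prop) : space :=
  Space {y : Y | P y} (fun W => exists V, is_open Y V /\ forall y, W y <-> V (proj1_sig y)).

Definition CL_carrier (X : space) : Type := {A : X -> Prop | is_closed X A}.

Definition vietoris_subbase (X : space) (S : CL_carrier X -> Prop) : Prop :=
  exists U : X -> Prop, is_open X U /\
    ((forall A, S A <-> (forall x, proj1_sig A x -> U x)) \/
     (forall A, S A <-> (exists x, proj1_sig A x /\ U x))).

Definition Vietoris (X : space) : space :=
  Space (CL_carrier X) (generated (vietoris_subbase X)).

Definition card_1_or_2 {T : Type} (A : T -> Prop) : Prop :=
  (exists x, A x) /\ (forall x y z, A x -> A y -> A z -> x = y \/ x = z \/ y = z).

Definition F2 (X : space) : space :=
  subspace (Vietoris X) (fun A => card_1_or_2 (proj1_sig A)).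

Definition continuous {X Y : space} (f : X -> Y) : Prop :=
  forall V, is_open Y V -> is_open X (fun x => V (f x)).

Definition homeomorphic (X Y : space) : Prop :=
  exists (f : X -> Y) (g : Y -> X),
    (forall x, g (f x) = x) /\ (forall y, f (g y) = y) /\ continuous f /\ continuous g.

Definition is_homeomorphism {X Y : space} (f : X -> Y) : Prop :=
  exists g : Y -> X,
    (forall x, g (f x) = x) /\ (forall y, f (g y) = y) /\ continuous f /\ continuous g.

Definition homogeneous (X : space) : Prop :=
  forall x y : X, exists h : X -> X, is_homeomorphism h /\ h x = y.

(* Main.v *)
Require Import Defs.
From Stdlib Require Import Reals List.
From Stdlib Require Import Lra Lia ZArith ClassicalEpsilon Classical FunctionalExtensionality PropExtensionality ProofIrrelevance.
Open Scope R_scope.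


Fixpoint V (n:nat) (x y : R) : R :=
  match n with
  | O => 0
  | S n => if Rlt_dec x (1/2) then (if Rlt_dec y (1/2) then V n (2*x) (2*y) / 2 else y)
           else V n (2*x-1) (2*y-1)
  end.

Fixpoint SepStop (n:nat) (x y:R) : Prop :=
  match n with
  | O => False
  | S n => (x < 1/2 /\ 1/2 <= y) \/ (x < 1/2 /\ y < 1/2 /\ SepStop n (2*x) (2*y))
           \/ (1/2 <= x /\ SepStop n (2*x-1) (2*y-1))
  end.

Fixpoint W (n:nat) (u w:R) : R :=
  match n with
  | O => u
  | S n => if Rlt_dec u (1/2) then (if Rlt_dec w (1/2) then W n (2*u) (2*w) / 2 else w)
           else (W n (2*u-1) w + 1) / 2
  end.

Fixpoint Stop (n:nat) (u w:R) : Prop :=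
  match n with
  | O => False
  | S n => (u < 1/2 /\ 1/2 <= w) \/ (u < 1/2 /\ w < 1/2 /\ Stop n (2*u) (2*w))
           \/ (1/2 <= u /\ Stop n (2*u-1) w)
  end.

Lemma V_ge0 : forall n x y, 0 <= V n x y.
Proof.
  induction n; intros; simpl. lra.
  destruct (Rlt_dec x (1/2)); [destruct (Rlt_dec y (1/2))|].
  - specialize (IHn (2*x) (2*y)). lra.
  - lra.
  - apply IHn.
Qed.

Lemma V_lt1 : forall n x y, y < 1 -> V n x y < 1.
Proof.
  induction n; intros; simpl. lra.
  destruct (Rlt_dec x (1/2)); [destruct (Rlt_dec y (1/2))|].
  - specialize (IHn (2*x) (2*y)). assert (V n (2*x) (2*y) < 1) by (apply IHn; lra). lra.
  - lra.
  - apply IHn; lra.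
Qed.

Lemma V_diag : forall n x, V n x x = 0.
Proof.
  induction n; intros; simpl. lra.
  destruct (Rlt_dec x (1/2)); [destruct (Rlt_dec x (1/2))|].
  - rewrite IHn. lra.
  - lra.
  - apply IHn.
Qed.

Lemma SepStop_mono : forall n x y, SepStop n x y -> SepStop (S n) x y /\ V (S n) x y = V n x y.
Proof.
  induction n; intros x y H. simpl in H; contradiction.
  destruct H as [[H1 H2]|[[H1 [H2 H3]]|[H1 H3]]].
  - split. left; auto. simpl.
    destruct (Rlt_dec x (1/2)); [destruct (Rlt_dec y (1/2))|]; lra.
  - destruct (IHn _ _ H3) as [IH1 IH2]. split. right; left; auto.
    change (V (S (S n)) x y) with
      (if Rlt_dec x (1/2) then (if Rlt_dec y (1/2) then V (S n) (2*x) (2*y) / 2 else y)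
           else V (S n) (2*x-1) (2*y-1)).
    change (V (S n) x y) with
      (if Rlt_dec x (1/2) then (if Rlt_dec y (1/2) then V n (2*x) (2*y) / 2 else y)
           else V n (2*x-1) (2*y-1)).
    destruct (Rlt_dec x (1/2)); [destruct (Rlt_dec y (1/2))|]; try lra; auto.
  - destruct (IHn _ _ H3) as [IH1 IH2]. split. right; right; auto.
    change (V (S (S n)) x y) with
      (if Rlt_dec x (1/2) then (if Rlt_dec y (1/2) then V (S n) (2*x) (2*y) / 2 else y)
           else V (S n) (2*x-1) (2*y-1)).
    change (V (S n) x y) with
      (if Rlt_dec x (1/2) then (if Rlt_dec y (1/2) then V n (2*x) (2*y) / 2 else y)
           else V n (2*x-1) (2*y-1)).
    destruct (Rlt_dec x (1/2)); [destruct (Rlt_dec y (1/2))|]; try lra; auto.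
Qed.

Lemma SepStop_stable : forall n x y, SepStop n x y -> forall m, (n <= m)%nat ->
  SepStop m x y /\ V m x y = V n x y.
Proof.
  intros n x y H m Hm. induction Hm. auto.
  destruct IHHm as [A B]. destruct (SepStop_mono _ _ _ A). split; auto. congruence.
Qed.

Lemma Stop_mono : forall n u w, Stop n u w -> Stop (S n) u w /\ W (S n) u w = W n u w.
Proof.
  induction n; intros u w H. simpl in H; contradiction.
  destruct H as [[H1 H2]|[[H1 [H2 H3]]|[H1 H3]]].
  - split. left; auto. simpl.
    destruct (Rlt_dec u (1/2)); [destruct (Rlt_dec w (1/2))|]; lra.
  - destruct (IHn _ _ H3) as [IH1 IH2]. split. right; left; auto.
    change (W (S (S n)) u w) with
      (if Rlt_dec u (1/2) then (if Rlt_dec w (1/2) then W (S n) (2*u) (2*w) / 2 else w)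
           else (W (S n) (2*u-1) w + 1) / 2).
    change (W (S n) u w) with
      (if Rlt_dec u (1/2) then (if Rlt_dec w (1/2) then W n (2*u) (2*w) / 2 else w)
           else (W n (2*u-1) w + 1) / 2).
    destruct (Rlt_dec u (1/2)); [destruct (Rlt_dec w (1/2))|]; try lra; auto.
  - destruct (IHn _ _ H3) as [IH1 IH2]. split. right; right; auto.
    change (W (S (S n)) u w) with
      (if Rlt_dec u (1/2) then (if Rlt_dec w (1/2) then W (S n) (2*u) (2*w) / 2 else w)
           else (W (S n) (2*u-1) w + 1) / 2).
    change (W (S n) u w) with
      (if Rlt_dec u (1/2) then (if Rlt_dec w (1/2) then W n (2*u) (2*w) / 2 else w)
           else (W n (2*u-1) w + 1) / 2).
    destruct (Rlt_dec u (1/2)); [destruct (Rlt_dec w (1/2))|]; try lra; auto.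
Qed.

Lemma Stop_stable : forall n u w, Stop n u w -> forall m, (n <= m)%nat ->
  Stop m u w /\ W m u w = W n u w.
Proof.
  intros n u w H m Hm. induction Hm. auto.
  destruct IHHm as [A B]. destruct (Stop_mono _ _ _ A). split; auto. congruence.
Qed.

Lemma W_zero : forall n u, W n u 0 = u.
Proof.
  induction n; intros; simpl. auto.
  destruct (Rlt_dec u (1/2)); [destruct (Rlt_dec 0 (1/2))|].
  - replace (2*0) with 0 by ring. rewrite IHn. lra.
  - lra.
  - rewrite IHn. lra.
Qed.

Lemma W_ge : forall n u w, u <= W n u w.
Proof.
  induction n; intros; simpl. lra.
  destruct (Rlt_dec u (1/2)); [destruct (Rlt_dec w (1/2))|].
  - specialize (IHn (2*u) (2*w)). lra.
  - lra.
  - specialize (IHn (2*u-1) w). lra.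
Qed.

Lemma W_lt1 : forall n u w, u < 1 -> w < 1 -> W n u w < 1.
Proof.
  induction n; intros; simpl. lra.
  destruct (Rlt_dec u (1/2)); [destruct (Rlt_dec w (1/2))|].
  - assert (W n (2*u) (2*w) < 1) by (apply IHn; lra). lra.
  - lra.
  - assert (W n (2*u-1) w < 1) by (apply IHn; lra). lra.
Qed.

Lemma hp_pos : forall n, 0 < (/2)^n.
Proof. intros; apply pow_lt; lra. Qed.

Lemma hp_small : forall t, 0 < t -> exists n, (/2)^n < t.
Proof.
  intros t Ht. destruct (pow_lt_1_zero (/2) ltac:(rewrite Rabs_right; lra) t Ht) as [N HN].
  exists N. specialize (HN N (le_n _)). rewrite Rabs_right in HN; auto.
  left; apply hp_pos.
Qed.

Lemma hp_S : forall n, (/2)^(S n) = /2 * (/2)^n.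
Proof. reflexivity. Qed.

Lemma SepStop_exists : forall n x y, 0 <= x -> x < y -> y < 1 -> (/2)^n <= y - x -> SepStop n x y.
Proof.
  induction n; intros x y H0 H1 H2 H3; simpl in *. lra.
  assert (Hp := hp_pos n).
  destruct (Rlt_dec x (1/2)).
  - destruct (Rlt_dec y (1/2)).
    + right; left. repeat split; auto. apply IHn; lra.
    + left; lra.
  - right; right. split. lra. apply IHn; lra.
Qed.

Lemma sep_exists : forall x y, 0 <= x -> x < y -> y < 1 -> exists n, SepStop n x y.
Proof.
  intros. destruct (hp_small (y-x)) as [n Hn]. lra.
  exists n. apply SepStop_exists; lra.
Qed.

Lemma below_one : forall x, x < 1 -> exists j, x < 1 - (/2)^j.
Proof. intros. destruct (hp_small (1-x)) as [j Hj]. lra. exists j. lra. Qed.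

Lemma Stop_exists : forall k u w, 0 <= u < 1 -> (/2)^k <= w < 1 -> exists n, Stop n u w.
Proof.
  induction k; intros u w Hu Hw. simpl in Hw. lra.
  destruct Hu as [Hu0 Hu1]. destruct (below_one u Hu1) as [j Hj].
  revert u Hu0 Hu1 Hj. induction j; intros u Hu0 Hu1 Hj. simpl in Hj. lra.
  assert (Hp := hp_pos k). assert (Hpj := hp_pos j). rewrite hp_S in Hw, Hj.
  destruct (Rlt_dec u (1/2)).
  - destruct (Rlt_dec w (1/2)).
    + destruct (IHk (2*u) (2*w)) as [m Hm]; try lra. exists (S m). right; left. repeat split; auto.
    + exists 1%nat. left; lra.
  - destruct (IHj (2*u-1)) as [m Hm]; try lra. exists (S m). right; right. split; auto; lra.
Qed.

Lemma stop_exists : forall u w, 0 <= u < 1 -> 0 < w < 1 -> exists n, Stop n u w.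
Proof.
  intros. destruct (hp_small w) as [k Hk]. lra. apply (Stop_exists k); lra.
Qed.

Definition psi (x y : R) : R := V (epsilon (inhabits 0%nat) (fun n => SepStop n x y)) x y.
Definition chi (u w : R) : R := W (epsilon (inhabits 0%nat) (fun n => Stop n u w)) u w.

Lemma psi_eq : forall n x y, SepStop n x y -> psi x y = V n x y.
Proof.
  intros n x y H. unfold psi.
  assert (H' := epsilon_spec (inhabits 0%nat) (fun n => SepStop n x y) (ex_intro _ n H)).
  set (m := epsilon _ _) in *.
  destruct (SepStop_stable _ _ _ H (Nat.max n m) (Nat.le_max_l _ _)) as [_ E1].
  destruct (SepStop_stable _ _ _ H' (Nat.max n m) (Nat.le_max_r _ _)) as [_ E2].
  congruence.
Qed.

Lemma chi_eq : forall n u w, Stop n u w -> chi u w = W n u w.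
Proof.
  intros n u w H. unfold chi.
  assert (H' := epsilon_spec (inhabits 0%nat) (fun n => Stop n u w) (ex_intro _ n H)).
  set (m := epsilon _ _) in *.
  destruct (Stop_stable _ _ _ H (Nat.max n m) (Nat.le_max_l _ _)) as [_ E1].
  destruct (Stop_stable _ _ _ H' (Nat.max n m) (Nat.le_max_r _ _)) as [_ E2].
  congruence.
Qed.

Lemma psi_diag : forall x, psi x x = 0.
Proof. intros; unfold psi; apply V_diag. Qed.
Lemma psi_ge0 : forall x y, 0 <= psi x y.
Proof. intros; unfold psi; apply V_ge0. Qed.
Lemma psi_lt1 : forall x y, y < 1 -> psi x y < 1.
Proof. intros; unfold psi; apply V_lt1; auto. Qed.
Lemma chi_zero : forall u, chi u 0 = u.
Proof. intros; unfold chi; apply W_zero. Qed.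
Lemma chi_ge : forall u w, u <= chi u w.
Proof. intros; unfold chi; apply W_ge. Qed.
Lemma chi_lt1 : forall u w, u < 1 -> w < 1 -> chi u w < 1.
Proof. intros; unfold chi; apply W_lt1; auto. Qed.

Lemma inv1 : forall n u w, Stop n u w -> 0 <= u -> u < 1 -> 0 <= w -> w < 1 ->
  SepStop n u (W n u w) /\ V n u (W n u w) = w.
Proof.
  induction n; intros u w H Hu0 Hu1 Hw0 Hw1. simpl in H; contradiction.
  destruct H as [[H1 H2]|[[H1 [H2 H3]]|[H1 H3]]].
  - assert (E : W (S n) u w = w) by (simpl; destruct (Rlt_dec u (1/2)); [destruct (Rlt_dec w (1/2))|]; lra).
    rewrite E. split. left; lra. simpl; destruct (Rlt_dec u (1/2)); [destruct (Rlt_dec w (1/2))|]; lra.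
  - destruct (IHn (2*u) (2*w) H3) as [A B]; try lra.
    assert (Y1 := W_lt1 n (2*u) (2*w) ltac:(lra) ltac:(lra)).
    assert (E : W (S n) u w = W n (2*u) (2*w) / 2) by (simpl; destruct (Rlt_dec u (1/2)); [destruct (Rlt_dec w (1/2))|]; lra).
    rewrite E. set (Y := W n (2*u) (2*w)) in *.
    replace (2 * (Y/2)) with Y by field. split.
    + right; left. split; [lra|split;[lra|]]. replace (2 * (Y/2)) with Y by field. auto.
    + simpl. destruct (Rlt_dec u (1/2)); [destruct (Rlt_dec (Y/2) (1/2))|]; try lra.
      replace (2 * (Y/2)) with Y by field. lra.
  - destruct (IHn (2*u-1) w H3) as [A B]; try lra.
    assert (E : W (S n) u w = (W n (2*u-1) w + 1) / 2) by (simpl; destruct (Rlt_dec u (1/2)); [destruct (Rlt_dec w (1/2))|]; lra).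
    rewrite E. set (Y := W n (2*u-1) w) in *. split.
    + right; right. split; [lra|]. replace (2 * ((Y+1)/2) - 1) with Y by field. auto.
    + simpl. destruct (Rlt_dec u (1/2)); try lra.
      replace (2 * ((Y+1)/2) - 1) with Y by field. auto.
Qed.

Lemma inv2 : forall n x y, SepStop n x y -> 0 <= x -> y < 1 ->
  Stop n x (V n x y) /\ W n x (V n x y) = y.
Proof.
  induction n; intros x y H Hx Hy. simpl in H; contradiction.
  destruct H as [[H1 H2]|[[H1 [H2 H3]]|[H1 H3]]].
  - assert (E : V (S n) x y = y) by (simpl; destruct (Rlt_dec x (1/2)); [destruct (Rlt_dec y (1/2))|]; lra).
    rewrite E. split. left; lra. simpl; destruct (Rlt_dec x (1/2)); [destruct (Rlt_dec y (1/2))|]; lra.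
  - destruct (IHn (2*x) (2*y) H3) as [A B]; try lra.
    assert (Z1 := V_lt1 n (2*x) (2*y) ltac:(lra)).
    assert (Z0 := V_ge0 n (2*x) (2*y)).
    assert (E : V (S n) x y = V n (2*x) (2*y) / 2) by (simpl; destruct (Rlt_dec x (1/2)); [destruct (Rlt_dec y (1/2))|]; lra).
    rewrite E. set (Z := V n (2*x) (2*y)) in *. split.
    + right; left. split; [lra|split;[lra|]]. replace (2 * (Z/2)) with Z by field. auto.
    + simpl. destruct (Rlt_dec x (1/2)); [destruct (Rlt_dec (Z/2) (1/2))|]; try lra.
      replace (2 * (Z/2)) with Z by field. lra.
  - destruct (IHn (2*x-1) (2*y-1) H3) as [A B]; try lra.
    assert (E : V (S n) x y = V n (2*x-1) (2*y-1)) by (simpl; destruct (Rlt_dec x (1/2)); [destruct (Rlt_dec y (1/2))|]; lra).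
    rewrite E. set (Z := V n (2*x-1) (2*y-1)) in *. split.
    + right; right. split; [lra|auto].
    + simpl. destruct (Rlt_dec x (1/2)); try lra.
Qed.

Lemma min3 : forall a b c, 0 < a -> 0 < b -> 0 < c ->
  exists d, 0 < d /\ d <= a /\ d <= b /\ d <= c.
Proof.
  intros. exists (Rmin a (Rmin b c)). repeat split.
  - apply Rmin_glb_lt; auto. apply Rmin_glb_lt; auto.
  - apply Rmin_l.
  - eapply Rle_trans. apply Rmin_r. apply Rmin_l.
  - eapply Rle_trans. apply Rmin_r. apply Rmin_r.
Qed.

Lemma V_cont : forall n x y, SepStop n x y -> forall eps, 0 < eps -> exists d, 0 < d /\
  forall x' y', x <= x' < x + d -> y <= y' < y + d ->
  SepStop n x' y' /\ V n x y <= V n x' y' < V n x y + eps.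
Proof.
  induction n; intros x y H eps He. simpl in H; contradiction.
  destruct H as [[H1 H2]|[[H1 [H2 H3]]|[H1 H3]]].
  - destruct (min3 (1/2 - x) eps 1) as [d [D0 [D1 [D2 D3]]]]; try lra.
    exists d. split; auto. intros x' y' Hx Hy. split. left; lra.
    simpl. destruct (Rlt_dec x (1/2)); [destruct (Rlt_dec y (1/2))|]; try lra.
    destruct (Rlt_dec x' (1/2)); [destruct (Rlt_dec y' (1/2))|]; try lra.
  - destruct (IHn _ _ H3 (2*eps)) as [d' [D' HD']]. lra.
    destruct (min3 (d'/2) (1/2 - x) (1/2 - y)) as [d [D0 [D1 [D2 D3]]]]; try lra.
    exists d. split; auto. intros x' y' Hx Hy.
    destruct (HD' (2*x') (2*y')) as [A [B C]]; try lra. split.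
    right; left; repeat split; auto; lra.
    simpl. destruct (Rlt_dec x (1/2)); [destruct (Rlt_dec y (1/2))|]; try lra.
    destruct (Rlt_dec x' (1/2)); [destruct (Rlt_dec y' (1/2))|]; try lra.
  - destruct (IHn _ _ H3 eps He) as [d' [D' HD']].
    exists (d'/2). split. lra. intros x' y' Hx Hy.
    destruct (HD' (2*x'-1) (2*y'-1)) as [A [B C]]; try lra. split.
    right; right; split; auto; lra.
    simpl. destruct (Rlt_dec x (1/2)); try lra.
    destruct (Rlt_dec x' (1/2)); try lra.
Qed.

Lemma V_diag_cont : forall k x, 0 <= x < 1 -> exists d, 0 < d /\
  forall n x' y', x <= x' -> x' <= y' -> y' < x + d -> V n x' y' < (/2)^k.
Proof.
  induction k; intros x [Hx0 Hx1].
  - exists (1 - x). split. lra. intros. simpl. apply V_lt1. lra.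
  - destruct (below_one x Hx1) as [j Hj]. revert x Hx0 Hx1 Hj.
    induction j; intros x Hx0 Hx1 Hj. simpl in Hj; lra.
    assert (Hp := hp_pos k). assert (Hpj := hp_pos j). rewrite hp_S in Hj |- *.
    destruct (Rlt_dec x (1/2)) as [Hlt|Hge].
    + destruct (IHk (2*x)) as [d' [D' HD']]. lra.
      destruct (min3 (d'/2) (1/2 - x) 1) as [d [D0 [D1 [D2 D3]]]]; try lra.
      exists d. split; auto. intros n x' y' A B C. destruct n. simpl. lra.
      simpl. destruct (Rlt_dec x' (1/2)); [destruct (Rlt_dec y' (1/2))|]; try lra.
      specialize (HD' n (2*x') (2*y') ltac:(lra) ltac:(lra) ltac:(lra)). lra.
    + destruct (IHj (2*x-1)) as [d' [D' HD']]; try lra.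
      exists (d'/2). split. lra. intros n x' y' A B C. destruct n. simpl. lra.
      simpl. destruct (Rlt_dec x' (1/2)); try lra.
      specialize (HD' n (2*x'-1) (2*y'-1) ltac:(lra) ltac:(lra) ltac:(lra)). rewrite hp_S in HD'. lra.
Qed.

Lemma W_cont : forall n u w, Stop n u w -> forall eps, 0 < eps -> exists d, 0 < d /\
  forall u' w', u <= u' < u + d -> w <= w' < w + d ->
  Stop n u' w' /\ W n u w <= W n u' w' < W n u w + eps.
Proof.
  induction n; intros u w H eps He. simpl in H; contradiction.
  destruct H as [[H1 H2]|[[H1 [H2 H3]]|[H1 H3]]].
  - destruct (min3 (1/2 - u) eps 1) as [d [D0 [D1 [D2 D3]]]]; try lra.
    exists d. split; auto. intros u' w' Hu Hw. split. left; lra.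
    simpl. destruct (Rlt_dec u (1/2)); [destruct (Rlt_dec w (1/2))|]; try lra.
    destruct (Rlt_dec u' (1/2)); [destruct (Rlt_dec w' (1/2))|]; try lra.
  - destruct (IHn _ _ H3 (2*eps)) as [d' [D' HD']]. lra.
    destruct (min3 (d'/2) (1/2 - u) (1/2 - w)) as [d [D0 [D1 [D2 D3]]]]; try lra.
    exists d. split; auto. intros u' w' Hu Hw.
    destruct (HD' (2*u') (2*w')) as [A [B C]]; try lra. split.
    right; left; repeat split; auto; lra.
    simpl. destruct (Rlt_dec u (1/2)); [destruct (Rlt_dec w (1/2))|]; try lra.
    destruct (Rlt_dec u' (1/2)); [destruct (Rlt_dec w' (1/2))|]; try lra.
  - destruct (IHn _ _ H3 (2*eps)) as [d' [D' HD']]. lra.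
    exists (d'/2). split. lra. intros u' w' Hu Hw.
    destruct (HD' (2*u'-1) w') as [A [B C]]; try lra. split.
    right; right; split; auto; lra.
    simpl. destruct (Rlt_dec u (1/2)); try lra.
    destruct (Rlt_dec u' (1/2)); try lra.
Qed.

Lemma W_edge : forall k u, 0 <= u < 1 -> exists d, 0 < d /\
  forall n u' w', u <= u' < u + d -> 0 <= w' < d -> W n u' w' < u + (/2)^k.
Proof.
  induction k; intros u [Hu0 Hu1].
  - exists (Rmin (1 - u) 1). split. apply Rmin_glb_lt; lra.
    assert (Rmin (1-u) 1 <= 1 - u) by apply Rmin_l. assert (Rmin (1-u) 1 <= 1) by apply Rmin_r.
    intros. simpl. assert (W n u' w' < 1) by (apply W_lt1; lra). lra.
  - destruct (below_one u Hu1) as [j Hj]. revert u Hu0 Hu1 Hj.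
    induction j; intros u Hu0 Hu1 Hj. simpl in Hj; lra.
    assert (Hp := hp_pos k). assert (Hpj := hp_pos j). rewrite hp_S in Hj |- *.
    destruct (Rlt_dec u (1/2)) as [Hlt|Hge].
    + destruct (IHk (2*u)) as [d' [D' HD']]. lra.
      destruct (min3 (d'/2) (1/2 - u) (/2 * (/2)^k)) as [d [D0 [D1 [D2 D3]]]]; try lra.
      exists d. split; auto. intros n u' w' A B. destruct n. simpl. lra.
      simpl. destruct (Rlt_dec u' (1/2)); [destruct (Rlt_dec w' (1/2))|]; try lra.
      specialize (HD' n (2*u') (2*w') ltac:(lra) ltac:(lra)). lra.
    + destruct (IHj (2*u-1)) as [d' [D' HD']]; try lra.
      destruct (min3 (d'/2) (/2 * (/2)^k) 1) as [d [D0 [D1 [D2 D3]]]]; try lra.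
      exists d. split; auto. intros n u' w' A B. destruct n. simpl. lra.
      simpl. destruct (Rlt_dec u' (1/2)); try lra.
      specialize (HD' n (2*u'-1) w' ltac:(lra) ltac:(lra)). rewrite hp_S in HD'. lra.
Qed.

Definition fl (r : R) : Z := (up r - 1)%Z.

Lemma fl_spec : forall r, IZR (fl r) <= r < IZR (fl r) + 1.
Proof.
  intros r. unfold fl. destruct (archimed r) as [A B]. rewrite minus_IZR. simpl. lra.
Qed.

Lemma fl_unique : forall z r, IZR z <= r < IZR z + 1 -> fl r = z.
Proof.
  intros z r H. destruct (fl_spec r) as [A B].
  assert (H1 : (z < fl r + 1)%Z). { apply lt_IZR. rewrite plus_IZR. simpl. lra. }
  assert (H2 : (fl r < z + 1)%Z). { apply lt_IZR. rewrite plus_IZR. simpl. lra. }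
  lia.
Qed.

Lemma fl_local : forall r, exists d, 0 < d /\ forall r', r <= r' < r + d -> fl r' = fl r.
Proof.
  intros r. destruct (fl_spec r). exists (IZR (fl r) + 1 - r). split. lra.
  intros. apply fl_unique. lra.
Qed.

Lemma fl_mono : forall x y, x <= y -> (fl x <= fl y)%Z.
Proof.
  intros. destruct (fl_spec x), (fl_spec y).
  assert (fl x < fl y + 1)%Z. { apply lt_IZR. rewrite plus_IZR. simpl. lra. } lia.
Qed.

Lemma fl_shift : forall (n:Z) t, 0 <= t < 1 -> fl (IZR n + t) = n.
Proof. intros. apply fl_unique. lra. Qed.

Definition e (j:Z) : Z := if Z.eqb (j mod 2) 0 then (j / 2)%Z else (- ((j+1)/2))%Z.
Definition einv (k:Z) : Z := if Z.ltb 0 k then (2*k)%Z else (-2*k-1)%Z.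

Lemma e_nz : forall j, (j >= 1)%Z -> e j <> 0%Z.
Proof.
  intros j H. unfold e. destruct (Z.eqb_spec (j mod 2) 0); Z.div_mod_to_equations; lia.
Qed.

Lemma einv_e : forall j, (j >= 1)%Z -> einv (e j) = j.
Proof.
  intros j H. unfold e, einv. destruct (Z.eqb_spec (j mod 2) 0);
  destruct (Z.ltb_spec 0 (j/2)); destruct (Z.ltb_spec 0 (- ((j+1)/2)));
  Z.div_mod_to_equations; lia.
Qed.

Lemma e_einv : forall k, k <> 0%Z -> (einv k >= 1)%Z /\ e (einv k) = k.
Proof.
  intros k H. unfold e, einv. destruct (Z.ltb_spec 0 k).
  - split. lia. destruct (Z.eqb_spec ((2*k) mod 2) 0); Z.div_mod_to_equations; lia.
  - split. lia. destruct (Z.eqb_spec ((-2*k-1) mod 2) 0); Z.div_mod_to_equations; lia.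
Qed.

Definition PsiG (x y : R) : R :=
  if Z.eq_dec (fl y) (fl x) then psi (x - IZR (fl x)) (y - IZR (fl x))
  else IZR (e (fl y - fl x)) + (y - IZR (fl y)).

Definition ChiG (u w : R) : R :=
  if Z.eq_dec (fl w) 0 then IZR (fl u) + chi (u - IZR (fl u)) w
  else IZR (fl u) + IZR (einv (fl w)) + (w - IZR (fl w)).

Lemma ChiG_ge : forall u w, u <= ChiG u w.
Proof.
  intros. unfold ChiG. destruct (fl_spec u), (fl_spec w).
  destruct (Z.eq_dec (fl w) 0).
  - assert (Hc := chi_ge (u - IZR (fl u)) w). lra.
  - destruct (e_einv _ n) as [G1 G2]. assert (G3 : (1 <= einv (fl w))%Z) by lia. apply IZR_le in G3. simpl in G3. lra.
Qed.

Lemma psi_chi : forall u w, 0 <= u < 1 -> 0 <= w < 1 -> psi u (chi u w) = w.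
Proof.
  intros u w Hu Hw. destruct (Req_dec w 0).
  - subst. rewrite chi_zero, psi_diag. auto.
  - destruct (stop_exists u w) as [n Hn]; try lra.
    rewrite (chi_eq n) by auto. destruct (inv1 n u w Hn) as [A B]; try lra.
    rewrite (psi_eq n) by auto. auto.
Qed.

Lemma chi_psi : forall x y, 0 <= x -> x <= y -> y < 1 -> chi x (psi x y) = y.
Proof.
  intros x y H0 H1 H2. destruct (Req_dec x y).
  - subst. rewrite psi_diag, chi_zero. auto.
  - destruct (sep_exists x y) as [n Hn]; try lra.
    rewrite (psi_eq n) by auto. destruct (inv2 n x y Hn) as [A B]; try lra.
    rewrite (chi_eq n) by auto. auto.
Qed.

Lemma ChiG_PsiG : forall x y, x <= y -> ChiG x (PsiG x y) = y.
Proof.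
  intros x y H. destruct (fl_spec x) as [X0 X1], (fl_spec y) as [Y0 Y1].
  assert (M := fl_mono x y H).
  unfold PsiG. destruct (Z.eq_dec (fl y) (fl x)) as [E|E].
  - rewrite E in *. set (n := fl x) in *.
    assert (P0 := psi_ge0 (x - IZR n) (y - IZR n)).
    assert (P1 := psi_lt1 (x - IZR n) (y - IZR n) ltac:(lra)).
    unfold ChiG. rewrite (fl_unique 0 _) by (simpl; lra).
    destruct (Z.eq_dec 0 0); [|congruence]. fold n.
    rewrite chi_psi by lra. lra.
  - assert (J : (fl y - fl x >= 1)%Z) by lia.
    assert (Ne := e_nz _ J). assert (Ei := einv_e _ J).
    unfold ChiG. rewrite (fl_unique (e (fl y - fl x)) _) by lra.
    destruct (Z.eq_dec (e (fl y - fl x)) 0); [contradiction|].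
    rewrite Ei. rewrite minus_IZR. lra.
Qed.

Lemma PsiG_ChiG : forall u w, PsiG u (ChiG u w) = w.
Proof.
  intros u w. destruct (fl_spec u) as [U0 U1], (fl_spec w) as [W0 W1].
  unfold ChiG. destruct (Z.eq_dec (fl w) 0) as [E|E].
  - rewrite E in *. simpl in *. set (n := fl u) in *.
    assert (C0 := chi_ge (u - IZR n) w).
    assert (C1 := chi_lt1 (u - IZR n) w ltac:(lra) ltac:(lra)).
    unfold PsiG. rewrite (fl_shift n) by lra. fold n.
    destruct (Z.eq_dec n n); [|congruence].
    replace (IZR n + chi (u - IZR n) w - IZR n) with (chi (u - IZR n) w) by ring.
    apply psi_chi; lra.
  - destruct (e_einv _ E) as [J1 J2].
    unfold PsiG. set (n := fl u) in *. set (k := fl w) in *.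
    rewrite (fl_unique (n + einv k)%Z _) by (rewrite plus_IZR; lra).
    fold n. destruct (Z.eq_dec (n + einv k) n). lia.
    replace (n + einv k - n)%Z with (einv k) by lia. rewrite J2.
    rewrite plus_IZR. lra.
Qed.

Lemma PsiG_cont : forall x y, x <= y -> forall eps, 0 < eps -> exists d, 0 < d /\
  forall x' y', x <= x' < x + d -> y <= y' < y + d -> x' <= y' ->
  PsiG x y <= PsiG x' y' < PsiG x y + eps.
Proof.
  intros x y Hxy eps He.
  destruct (fl_local x) as [dx [Dx HDx]]. destruct (fl_local y) as [dy [Dy HDy]].
  destruct (fl_spec x) as [X0 X1], (fl_spec y) as [Y0 Y1].
  unfold PsiG. destruct (Z.eq_dec (fl y) (fl x)) as [E|E].
  - set (n := fl x) in *. rewrite E in Y0, Y1, HDy. destruct (Req_dec x y) as [Exy|Nxy].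
    + subst y. destruct (hp_small eps He) as [k Hk].
      destruct (V_diag_cont k (x - IZR n)) as [d1 [D1 HD1]]. lra.
      destruct (min3 d1 dx dy) as [d [D0 [Da [Db Dc]]]]; auto.
      exists d. split; auto. intros x' y' A B C.
      rewrite (HDx x') by lra. rewrite (HDy y') by lra. fold n.
      destruct (Z.eq_dec n n); [|congruence]. rewrite psi_diag.
      assert (P0 := psi_ge0 (x' - IZR n) (y' - IZR n)). split. lra.
      assert (HH : forall N, V N (x' - IZR n) (y' - IZR n) < (/2)^k) by (intro N; apply HD1; lra).
      unfold psi. set (N := epsilon _ _). specialize (HH N). lra.
    + assert (Lxy : x < y) by (destruct Hxy; [auto|contradiction]). destruct (sep_exists (x - IZR n) (y - IZR n)) as [m Hm]; try lra.
      destruct (V_cont m _ _ Hm eps He) as [d1 [D1 HD1]].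
      destruct (min3 d1 dx dy) as [d [D0 [Da [Db Dc]]]]; auto.
      exists d. split; auto. intros x' y' A B C.
      rewrite (HDx x') by lra. rewrite (HDy y') by lra. fold n.
      destruct (Z.eq_dec n n); [|congruence].
      destruct (HD1 (x' - IZR n) (y' - IZR n)) as [S1 S2]; try lra.
      rewrite (psi_eq m _ _ Hm). rewrite (psi_eq m _ _ S1). auto.
  - destruct (min3 eps dx dy) as [d [D0 [Da [Db Dc]]]]; auto.
    exists d. split; auto. intros x' y' A B C.
    rewrite (HDx x') by lra. rewrite (HDy y') by lra.
    destruct (Z.eq_dec (fl y) (fl x)); [contradiction|]. lra.
Qed.

Lemma ChiG_cont : forall u w eps, 0 < eps -> exists d, 0 < d /\
  forall u' w', u <= u' < u + d -> w <= w' < w + d ->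
  ChiG u w <= ChiG u' w' < ChiG u w + eps.
Proof.
  intros u w eps He.
  destruct (fl_local u) as [du [Du HDu]]. destruct (fl_local w) as [dw [Dw HDw]].
  destruct (fl_spec u) as [U0 U1], (fl_spec w) as [W0 W1].
  unfold ChiG. destruct (Z.eq_dec (fl w) 0) as [E|E].
  - set (n := fl u) in *. rewrite E in *. simpl in *. destruct (Req_dec w 0) as [Ew|Nw].
    + subst w. destruct (hp_small eps He) as [k Hk].
      destruct (W_edge k (u - IZR n)) as [d1 [D1 HD1]]. lra.
      destruct (min3 d1 du dw) as [d [D0 [Da [Db Dc]]]]; auto.
      exists d. split; auto. intros u' w' A B.
      rewrite (HDu u') by lra. rewrite (HDw w') by lra. fold n.
      destruct (Z.eq_dec 0 0); [|congruence]. rewrite chi_zero.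
      assert (P0 := chi_ge (u' - IZR n) w'). split. lra.
      assert (HH : forall N, W N (u' - IZR n) w' < u - IZR n + (/2)^k) by (intro N; apply HD1; lra).
      unfold chi. set (N := epsilon _ _). specialize (HH N). lra.
    + assert (Lw : 0 < w) by (destruct W0; [auto|congruence]). destruct (stop_exists (u - IZR n) w) as [m Hm]; try lra.
      destruct (W_cont m _ _ Hm eps He) as [d1 [D1 HD1]].
      destruct (min3 d1 du dw) as [d [D0 [Da [Db Dc]]]]; auto.
      exists d. split; auto. intros u' w' A B.
      rewrite (HDu u') by lra. rewrite (HDw w') by lra. fold n.
      destruct (Z.eq_dec 0 0); [|congruence].
      destruct (HD1 (u' - IZR n) w') as [S1 S2]; try lra.
      rewrite (chi_eq m _ _ Hm). rewrite (chi_eq m _ _ S1). lra.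
  - destruct (min3 eps du dw) as [d [D0 [Da [Db Dc]]]]; auto.
    exists d. split; auto. intros u' w' A B.
    rewrite (HDu u') by lra. rewrite (HDw w') by lra.
    destruct (Z.eq_dec (fl w) 0); [contradiction|]. lra.
Qed.

Definition box (p : R*R) (d:R) (q : R*R) : Prop :=
  fst p <= fst q < fst p + d /\ snd p <= snd q < snd p + d.

Lemma sorg_nbhd : forall U x, sorgenfrey_open U -> U x ->
  exists d, 0 < d /\ forall y, x <= y < x + d -> U y.
Proof.
  intros U x HU Ux. destruct (HU x Ux) as [a [b [H1 H2]]].
  exists (b - x). split. lra. intros. apply H2. lra.
Qed.

Lemma sorg_ival : forall a b, sorgenfrey_open (fun t => a <= t < b).
Proof. intros a b x Hx. exists a, b. split; auto. Qed.

Definition SS := prod_space Sorgenfrey Sorgenfrey.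

Lemma SS_open_box : forall W, is_open SS W -> forall p, W p ->
  exists d, 0 < d /\ forall q, box p d q -> W q.
Proof.
  intros W HW p Wp. destruct (HW p Wp) as [U [V [HU [HV [Up [Vp HUV]]]]]].
  destruct (sorg_nbhd U (fst p) HU Up) as [d1 [D1 H1]].
  destruct (sorg_nbhd V (snd p) HV Vp) as [d2 [D2 H2]].
  exists (Rmin d1 d2). split. apply Rmin_glb_lt; auto.
  assert (Rmin d1 d2 <= d1) by apply Rmin_l. assert (Rmin d1 d2 <= d2) by apply Rmin_r.
  intros q [A B]. simpl in *. apply HUV. apply H1; lra. apply H2; lra.
Qed.

Lemma box_SS_open : forall W : SS -> Prop,
  (forall p, W p -> exists d, 0 < d /\ forall q, box p d q -> W q) -> is_open SS W.
Proof.
  intros W HW p Wp. destruct (HW p Wp) as [d [D Hd]].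
  exists (fun t => fst p <= t < fst p + d), (fun t => snd p <= t < snd p + d).
  split. apply sorg_ival. split. apply sorg_ival. simpl. split. lra. split. lra.
  intros q A B. apply Hd. split; auto.
Qed.

Definition Hc := {p : R*R | fst p <= snd p}.
Definition H_open (U : Hc -> Prop) := forall p, U p ->
  exists d, 0 < d /\ forall q, box (proj1_sig p) d (proj1_sig q) -> U q.
Definition HS := Space Hc H_open.

Lemma Hc_ext : forall p q : Hc, proj1_sig p = proj1_sig q -> p = q.
Proof.
  intros [p hp] [q hq]. simpl. intros E. subst. f_equal. apply proof_irrelevance.
Qed.

Lemma cont_HS_SS : forall f : HS -> SS,
  (forall p eps, 0 < eps -> exists d, 0 < d /\
     forall q, box (proj1_sig p) d (proj1_sig q) -> box (f p) eps (f q)) -> continuous f.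
Proof.
  intros f Hf V HV p Vp. destruct (SS_open_box V HV (f p) Vp) as [e [E He]].
  destruct (Hf p e E) as [d [D Hd]]. exists d. split; auto.
Qed.

Lemma cont_SS_HS : forall g : SS -> HS,
  (forall p eps, 0 < eps -> exists d, 0 < d /\
     forall q, box p d q -> box (proj1_sig (g p)) eps (proj1_sig (g q))) -> continuous g.
Proof.
  intros g Hg V HV. apply box_SS_open. intros p Vp. destruct (HV (g p) Vp) as [e [E He]].
  destruct (Hg p e E) as [d [D Hd]]. exists d. split; auto.
Qed.

Lemma cont_SS_SS : forall g : SS -> SS,
  (forall p eps, 0 < eps -> exists d, 0 < d /\
     forall q, box p d q -> box (g p) eps (g q)) -> continuous g.
Proof.
  intros g Hg V HV. apply box_SS_open. intros p Vp. destruct (SS_open_box V HV (g p) Vp) as [e [E He]].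
  destruct (Hg p e E) as [d [D Hd]]. exists d. split; auto.
Qed.

Definition Phi (p : HS) : SS := (fst (proj1_sig p), PsiG (fst (proj1_sig p)) (snd (proj1_sig p))).
Definition Theta (q : SS) : HS := exist _ (fst q, ChiG (fst q) (snd q)) (ChiG_ge (fst q) (snd q)).

Lemma HS_SS : homeomorphic HS SS.
Proof.
  exists Phi, Theta. split; [|split; [|split]].
  - intros [[x y] h]. apply Hc_ext. simpl. f_equal. apply ChiG_PsiG. auto.
  - intros [u w]. unfold Phi, Theta. simpl. f_equal. apply PsiG_ChiG.
  - apply cont_HS_SS. intros [[x y] h] eps He. simpl in h.
    destruct (PsiG_cont x y h eps He) as [d1 [D1 H1]].
    exists (Rmin d1 eps). split. apply Rmin_glb_lt; auto.
    assert (Rmin d1 eps <= d1) by apply Rmin_l. assert (Rmin d1 eps <= eps) by apply Rmin_r.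
    intros [[x' y'] h'] [A B]. simpl in *. split; simpl. lra. apply H1; lra.
  - apply cont_SS_HS. intros [u w] eps He.
    destruct (ChiG_cont u w eps He) as [d1 [D1 H1]].
    exists (Rmin d1 eps). split. apply Rmin_glb_lt; auto.
    assert (Rmin d1 eps <= d1) by apply Rmin_l. assert (Rmin d1 eps <= eps) by apply Rmin_r.
    intros [u' w'] [A B]. simpl in *. split; simpl. lra. apply H1; lra.
Qed.

Definition FS := F2 Sorgenfrey.
Definition setof (B : FS) : R -> Prop := proj1_sig (proj1_sig B).

Lemma ex_min : forall A : R -> Prop, card_1_or_2 A -> exists a, A a /\ forall t, A t -> a <= t.
Proof.
  intros A [[x Ax] Hc]. destruct (classic (exists t, A t /\ t < x)) as [[t [At Lt]]|N].
  - exists t. split; auto. intros s As. destruct (Hc x t s Ax At As) as [E|[E|E]]; subst; lra.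
  - exists x. split; auto. intros s As. destruct (Rle_dec x s); auto.
    exfalso. apply N. exists s. split; auto. lra.
Qed.

Lemma ex_max : forall A : R -> Prop, card_1_or_2 A -> exists a, A a /\ forall t, A t -> t <= a.
Proof.
  intros A [[x Ax] Hc]. destruct (classic (exists t, A t /\ x < t)) as [[t [At Lt]]|N].
  - exists t. split; auto. intros s As. destruct (Hc x t s Ax At As) as [E|[E|E]]; subst; lra.
  - exists x. split; auto. intros s As. destruct (Rle_dec s x); auto.
    exfalso. apply N. exists s. split; auto. lra.
Qed.

Definition mn (B : FS) : R := proj1_sig (constructive_indefinite_description _ (ex_min (setof B) (proj2_sig B))).
Definition mx (B : FS) : R := proj1_sig (constructive_indefinite_description _ (ex_max (setof B) (proj2_sig B))).

Lemma mn_spec : forall B, setof B (mn B) /\ forall t, setof B t -> mn B <= t.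
Proof. intros B. unfold mn. destruct (constructive_indefinite_description _ _). simpl. auto. Qed.
Lemma mx_spec : forall B, setof B (mx B) /\ forall t, setof B t -> t <= mx B.
Proof. intros B. unfold mx. destruct (constructive_indefinite_description _ _). simpl. auto. Qed.

Lemma mn_le_mx : forall B, mn B <= mx B.
Proof. intros. destruct (mn_spec B) as [A1 A2], (mx_spec B) as [B1 B2]. auto. Qed.

Lemma two_pts : forall B t, setof B t -> t = mn B \/ t = mx B.
Proof.
  intros B t Ht. destruct (mn_spec B) as [A1 A2], (mx_spec B) as [B1 B2].
  destruct (proj2_sig B) as [_ Hc].
  destruct (Hc (mn B) (mx B) t A1 B1 Ht) as [E|[E|E]].
  - left. specialize (A2 t Ht). specialize (B2 t Ht). lra.
  - left; auto.
  - right; auto.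
Qed.

Definition pr (x y : R) : R -> Prop := fun t => t = x \/ t = y.

Lemma avoid : forall t x, t <> x -> exists d, 0 < d /\ forall s, t <= s < t + d -> s <> x.
Proof.
  intros t x H. destruct (Rlt_dec x t).
  - exists 1. split. lra. intros; lra.
  - exists (x - t). split. lra. intros; lra.
Qed.

Lemma pr_closed : forall x y, is_closed Sorgenfrey (pr x y).
Proof.
  intros x y t Ht. unfold pr in Ht.
  destruct (avoid t x) as [d1 [D1 H1]]. intro; apply Ht; auto.
  destruct (avoid t y) as [d2 [D2 H2]]. intro; apply Ht; auto.
  exists t, (t + Rmin d1 d2). split. split. lra. assert (0 < Rmin d1 d2) by (apply Rmin_glb_lt; auto). lra.
  assert (Rmin d1 d2 <= d1) by apply Rmin_l. assert (Rmin d1 d2 <= d2) by apply Rmin_r.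
  intros s Hs [E|E]. apply (H1 s); [lra|auto]. apply (H2 s); [lra|auto].
Qed.

Lemma pr_card : forall x y, card_1_or_2 (pr x y).
Proof.
  intros x y. split. exists x. left; auto.
  intros a b c [A|A] [B|B] [C|C]; subst; auto.
Qed.

Definition CLpr (x y : R) : CL_carrier Sorgenfrey := exist _ (pr x y) (pr_closed x y).
Definition Gm (p : HS) : FS := exist _ (CLpr (fst (proj1_sig p)) (snd (proj1_sig p)))
   (pr_card (fst (proj1_sig p)) (snd (proj1_sig p))).
Definition Fm (B : FS) : HS := exist _ (mn B, mx B) (mn_le_mx B).

Lemma FS_ext : forall B1 B2 : FS, (forall t, setof B1 t <-> setof B2 t) -> B1 = B2.
Proof.
  intros [[A1 c1] k1] [[A2 c2] k2]. unfold setof. simpl. intros H.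
  assert (A1 = A2). { apply functional_extensionality. intros t. apply propositional_extensionality. auto. }
  subst A2. assert (c1 = c2) by apply proof_irrelevance. subst c2.
  f_equal. apply proof_irrelevance.
Qed.

Lemma GF : forall B, Gm (Fm B) = B.
Proof.
  intros B. apply FS_ext. intros t. unfold Gm, Fm, setof, CLpr, pr. simpl. fold (setof B).
  destruct (mn_spec B), (mx_spec B). split.
  - intros [E|E]; subst; auto.
  - apply two_pts.
Qed.

Lemma mn_pr : forall B x y, x <= y -> (forall t, setof B t <-> (t = x \/ t = y)) -> mn B = x /\ mx B = y.
Proof.
  intros B x y h H. destruct (mn_spec B) as [A1 A2], (mx_spec B) as [B1 B2].
  apply H in A1. apply H in B1.
  specialize (A2 x (proj2 (H x) (or_introl eq_refl))).
  specialize (B2 y (proj2 (H y) (or_intror eq_refl))).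
  split; [destruct A1|destruct B1]; lra.
Qed.

Lemma FG : forall p, Fm (Gm p) = p.
Proof.
  intros [[x y] h]. simpl in h. apply Hc_ext. simpl.
  destruct (mn_pr (Gm (exist _ (x, y) h)) x y h (fun t => iff_refl _)) as [E1 E2].
  unfold Fm. simpl. rewrite E1, E2. auto.
Qed.

Definition Nb (A : R -> Prop) (eps : R) (D : R -> Prop) : Prop :=
  (forall t, D t -> exists s, A s /\ s <= t < s + eps) /\
  (forall s, A s -> exists t, D t /\ s <= t < s + eps).

Lemma Nb_refl : forall A eps, 0 < eps -> Nb A eps A.
Proof. intros. split; intros; eexists; split; eauto; lra. Qed.

Lemma Fm_pt : forall B B' eps, Nb (setof B) eps (setof B') ->
  box (proj1_sig (Fm B)) eps (proj1_sig (Fm B')).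
Proof.
  intros B B' eps [N1 N2]. unfold box; simpl.
  destruct (mn_spec B) as [A1 A2], (mx_spec B) as [B1 B2].
  destruct (mn_spec B') as [C1 C2], (mx_spec B') as [D1 D2].
  destruct (N1 _ C1) as [s [Hs Ls]]. specialize (A2 s Hs).
  destruct (N2 _ A1) as [t [Ht Lt]]. specialize (C2 t Ht).
  destruct (N2 _ B1) as [t' [Ht' Lt']]. specialize (D2 t' Ht').
  destruct (N1 _ D1) as [s' [Hs' Ls']]. specialize (B2 s' Hs').
  split; split; lra.
Qed.

Lemma Fm_cont : continuous Fm.
Proof.
  intros V HV.
  exists (fun C : CL_carrier Sorgenfrey => exists (B : FS) (eps : R), 0 < eps /\
     (forall B' : FS, Nb (setof B) eps (setof B') -> V (Fm B')) /\ Nb (setof B) eps (proj1_sig C)).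
  split.
  - intros C [B [eps [E [HB HC]]]].
    exists ((fun D : CL_carrier Sorgenfrey => forall t, proj1_sig D t -> exists s, setof B s /\ s <= t < s + eps)
       :: (fun D : CL_carrier Sorgenfrey => exists t, proj1_sig D t /\ mn B <= t < mn B + eps)
       :: (fun D : CL_carrier Sorgenfrey => exists t, proj1_sig D t /\ mx B <= t < mx B + eps) :: nil).
    split; [|split].
    + repeat constructor.
      * exists (fun t => exists s, setof B s /\ s <= t < s + eps). split.
        -- intros t [s [Hs Ls]]. exists s, (s + eps). split. lra. intros y Hy. exists s. auto.
        -- left. intros A. tauto.
      * exists (fun t => mn B <= t < mn B + eps). split. apply sorg_ival. right. intros A. tauto.
      * exists (fun t => mx B <= t < mx B + eps). split. apply sorg_ival. right. intros A. tauto.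
    + destruct HC as [H1 H2]. repeat constructor.
      * exact H1.
      * apply H2. apply mn_spec.
      * apply H2. apply mx_spec.
    + intros D HD. inversion HD as [|? ? S1 HD2]. inversion HD2 as [|? ? S2 HD3].
      inversion HD3 as [|? ? S3 _]. subst.
      exists B, eps. split; auto. split; auto. split. exact S1.
      intros s Hs. destruct (two_pts B s Hs); subst; auto.
  - intros y. split.
    + intros Vy. destruct (HV (Fm y) Vy) as [d [D Hd]].
      exists y, d. split; auto. split. intros B' HB'. apply Hd. apply Fm_pt. auto.
      apply Nb_refl; auto.
    + intros [B [eps [E [HB HC]]]]. apply HB. exact HC.
Qed.

Lemma sub_nbhd : forall Sb, vietoris_subbase Sorgenfrey Sb -> forall x y, Sb (CLpr x y) ->
  exists d, 0 < d /\ forall x' y', x <= x' < x + d -> y <= y' < y + d -> Sb (CLpr x' y').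
Proof.
  intros Sb [U [HU [Hl|Hr]]] x y H.
  - pose proof (proj1 (Hl _) H) as H0. clear H. rename H0 into H. simpl in H.
    destruct (sorg_nbhd U x HU (H x (or_introl eq_refl))) as [d1 [D1 H1]].
    destruct (sorg_nbhd U y HU (H y (or_intror eq_refl))) as [d2 [D2 H2]].
    exists (Rmin d1 d2). split. apply Rmin_glb_lt; auto.
    assert (Rmin d1 d2 <= d1) by apply Rmin_l. assert (Rmin d1 d2 <= d2) by apply Rmin_r.
    intros x' y' A B. apply (proj2 (Hl _)). simpl. intros t [E|E]; subst. apply H1; lra. apply H2; lra.
  - pose proof (proj1 (Hr _) H) as H0. clear H. simpl in H0. destruct H0 as [t [[E|E] Ut]]; subst.
    + destruct (sorg_nbhd U x HU Ut) as [d1 [D1 H1]]. exists d1. split; auto.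
      intros x' y' A B. apply (proj2 (Hr _)). exists x'. split. left; auto. apply H1; lra.
    + destruct (sorg_nbhd U y HU Ut) as [d1 [D1 H1]]. exists d1. split; auto.
      intros x' y' A B. apply (proj2 (Hr _)). exists y'. split. right; auto. apply H1; lra.
Qed.

Lemma list_nbhd : forall l, Forall (vietoris_subbase Sorgenfrey) l -> forall x y,
  Forall (fun S => S (CLpr x y)) l ->
  exists d, 0 < d /\ forall x' y', x <= x' < x + d -> y <= y' < y + d ->
  Forall (fun S => S (CLpr x' y')) l.
Proof.
  induction l as [|S l IH]; intros Hl x y H.
  - exists 1. split. lra. intros. constructor.
  - inversion Hl; subst. inversion H; subst.
    destruct (sub_nbhd S H2 x y H4) as [d1 [D1 H1]].
    destruct (IH H3 x y H5) as [d2 [D2 Hd2]].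
    exists (Rmin d1 d2). split. apply Rmin_glb_lt; auto.
    assert (Rmin d1 d2 <= d1) by apply Rmin_l. assert (Rmin d1 d2 <= d2) by apply Rmin_r.
    intros x' y' A B. constructor. apply H1; lra. apply Hd2; lra.
Qed.

Lemma Gm_cont : continuous Gm.
Proof.
  intros W [V0 [HV0 Hiff]]. intros [[x y] h] Wp.
  apply Hiff in Wp. destruct (HV0 _ Wp) as [l [L1 [L2 L3]]].
  destruct (list_nbhd l L1 x y L2) as [d [D Hd]].
  exists d. split; auto. intros [[x' y'] h'] [A B]. simpl in A, B.
  apply Hiff. apply L3. apply Hd; auto.
Qed.

Lemma FS_HS : homeomorphic FS HS.
Proof.
  exists Fm, Gm. split; [|split; [|split]]. apply GF. apply FG. apply Fm_cont. apply Gm_cont.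
Qed.

Lemma cont_comp : forall (X Y Z : space) (f : X -> Y) (g : Y -> Z),
  continuous f -> continuous g -> continuous (fun x => g (f x)).
Proof. intros X Y Z f g Hf Hg V HV. apply (Hf (fun y => V (g y))). apply Hg. auto. Qed.

Lemma homeo_trans : forall X Y Z, homeomorphic X Y -> homeomorphic Y Z -> homeomorphic X Z.
Proof.
  intros X Y Z [f [g [A [B [C D]]]]] [f' [g' [A' [B' [C' D']]]]].
  exists (fun x => f' (f x)), (fun z => g (g' z)). split; [|split; [|split]].
  - intros x. rewrite A'. auto.
  - intros z. rewrite B. auto.
  - apply cont_comp; auto.
  - apply cont_comp; auto.
Qed.

Definition tr (a b : R*R) (p : SS) : SS := (fst p + (fst b - fst a), snd p + (snd b - snd a)).

Lemma tr_cont : forall a b, continuous (tr a b).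
Proof.
  intros a b. apply cont_SS_SS. intros p eps He. exists eps. split; auto.
  intros q [A B]. unfold box, tr; simpl in *. split; lra.
Qed.

Lemma SS_homog : homogeneous SS.
Proof.
  intros x y. exists (tr x y). split.
  - exists (tr y x). split; [|split; [|split]].
    + intros p. unfold tr. destruct p; simpl. f_equal; ring.
    + intros p. unfold tr. destruct p; simpl. f_equal; ring.
    + apply tr_cont.
    + apply tr_cont.
  - unfold tr. destruct x, y; simpl. f_equal; ring.
Qed.

Lemma homog_transfer : forall X Y, homeomorphic X Y -> homogeneous Y -> homogeneous X.
Proof.
  intros X Y [f [g [A [B [C D]]]]] HY x y.
  destruct (HY (f x) (f y)) as [h [[k [K1 [K2 [K3 K4]]]] Hh]].
  exists (fun z => g (h (f z))). split.
  - exists (fun z => g (k (f z))). split; [|split; [|split]].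
    + intros z. rewrite B, K1, A. auto.
    + intros z. rewrite B, K2, A. auto.
    + apply cont_comp; auto. apply cont_comp; auto.
    + apply cont_comp; auto. apply cont_comp; auto.
  - rewrite Hh. apply A.
Qed.

Theorem theorem1p2 :
  homeomorphic (F2 Sorgenfrey) (prod_space Sorgenfrey Sorgenfrey) /\
  homogeneous (F2 Sorgenfrey).
Proof.
  assert (H : homeomorphic FS SS) by (apply (homeo_trans _ HS); [apply FS_HS|apply HS_SS]).
  split. exact H. apply (homog_transfer _ SS H SS_homog).
Qed.
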